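(* Let $G$ be a graph on $d+2$ vertices and $k > 1$. Then $G$ is representable in $\mathbb{R}^d$ with ratio $k$ if and only if both of the following hold: (1) $w^T B_G(k) w \geq 0$ for all $w \in \mathbf{1}^{\perp}$; (2) there exists a nonzero vector $w \in \mathbf{1}^{\perp}$ and a real number $\gamma$ such that $B_G(k) w = \gamma \mathbf{1}$.
   Context: Graphs are finite and simple with vertices labeled $1,\dots,d+2$. A finite set $S \subset \mathbb{R}^d$ is a 2-distance set if $\{\|p-q\| : p,q \in S, p\neq q\}$ has exactly two elements $\alpha_1 > \alpha_2$; its distance ratio is $k=\alpha_1/\alpha_2$. Its associated graph has vertex set $S$ with $p,q$ adjacent iff $\|p-q\|=\alpha_1$. $G$ is representable in $\mathbb{R}^d$ with ratio $k$ if some 2-distance set in $\mathbb{R}^d$ with distance ratio $k$ has associated graph $G$. $B_G(k)$ is the $(d+2)\times(d+2)$ matrix with entries $b_{ii}=0$, $b_{ij} = -1$ if $i\neq j$ and $\{i,j\}$ is not an edge, and $b_{ij} = -k^2$ if $\{i,j\}$ is an edge. $\mathbf{1}$ is the all-ones vector and $\mathbf{1}^{\perp}$ its orthogonal complement. *)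

(* Defs.v *)
From mathcomp Require Import all_boot all_order all_algebra reals.
Set Implicit Arguments. Unset Strict Implicit. Unset Printing Implicit Defensive.
Import Order.TTheory GRing.Theory Num.Theory.
Local Open Scope ring_scope.

Definition eucl_dist (R : realType) (d : nat) (p q : 'rV[R]_d) : R :=
  Num.sqrt (\sum_(i < d) (p 0 i - q 0 i) ^+ 2).

(* A finite simple graph on vertex set 'I_n (labels 1..n shifted to 0..n-1). *)
Definition simple_graph (n : nat) (e : rel 'I_n) : Prop :=
  irreflexive e /\ symmetric e.

Definition representable (R : realType) (d : nat) (e : rel 'I_(d.+2)) (k : R)
  : Prop :=
  exists (p : 'I_(d.+2) -> 'rV[R]_d) (a1 a2 : R),
    injective p /\ a2 < a1 /\ a1 / a2 = k /\
    (forall i j, i != j -> eucl_dist (p i) (p j) = a1 \/ eucl_dist (p i) (p j) = a2) /\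
    (exists i j, i != j /\ eucl_dist (p i) (p j) = a1) /\
    (exists i j, i != j /\ eucl_dist (p i) (p j) = a2) /\
    (forall i j, i != j -> (e i j <-> eucl_dist (p i) (p j) = a1)).

Definition BG (R : realType) (n : nat) (e : rel 'I_n) (k : R) : 'M[R]_n :=
  \matrix_(i < n, j < n)
    (if i == j then 0 else if e i j then - k ^+ 2 else -1).

Definition ones (R : realType) (n : nat) : 'cV[R]_n := const_mx 1.
Definition in_ones_perp (R : realType) (n : nat) (w : 'cV[R]_n) : Prop :=
  (ones R n)^T *m w = 0.

(* Main.v *)
Require Import Defs.
From mathcomp Require Import all_boot all_order all_algebra reals.
From mathcomp Require Import perm ring lra.
Set Implicit Arguments. Unset Strict Implicit. Unset Printing Implicit Defensive.
Import Order.TTheory GRing.Theory Num.Theory.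
Local Open Scope ring_scope.

Definition ext (R : Type) (m : nat) (x0 : R) (f : 'I_m -> R) : 'I_m.+1 -> R :=
  fun i => if unlift ord0 i is Some j then f j else x0.
Lemma ext0 (R : Type) m (x0 : R) f : @ext R m x0 f ord0 = x0.
Proof. by rewrite /ext unlift_none. Qed.
Lemma extl (R : Type) m (x0 : R) f j : @ext R m x0 f (lift ord0 j) = f j.
Proof. by rewrite /ext liftK. Qed.

Definition Qf (R : realType) m (G : 'I_m -> 'I_m -> R) (v : 'I_m -> R) :=
  \sum_i \sum_j v i * v j * G i j.

Lemma Q_ext (R : realType) m (G : 'I_m.+1 -> 'I_m.+1 -> R) (t : R) (v : 'I_m -> R) :
  (forall i j, G i j = G j i) ->
  Qf G (ext t v) = t ^+ 2 * G ord0 ord0 + 2 * t * (\sum_j G ord0 (lift ord0 j) * v j)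
     + Qf (fun i j => G (lift ord0 i) (lift ord0 j)) v.
Proof.
move=> sG; rewrite /Qf big_ord_recl ext0 big_ord_recl ext0.
under eq_bigr do rewrite extl.
under [in X in _ + X = _]eq_bigr => i _ do rewrite big_ord_recl extl ext0.
under [in X in _ + X = _]eq_bigr => i _ do under eq_bigr do rewrite extl.
rewrite big_split /= -!addrA; congr (_ + _).

rewrite addrA; congr (_ + _).
rewrite -big_split /= mulr_sumr; apply: eq_bigr => i _.
rewrite (sG (lift _ _)); ring.
Qed.

Lemma Qf0 (R : realType) m (G : 'I_m -> 'I_m -> R) : Qf G (fun _ => 0) = 0.
Proof. by rewrite /Qf big1 // => i _; rewrite big1 // => j _; rewrite !mul0r. Qed.

Lemma sum_delta_r (R : realType) m (c : 'I_m -> R) j :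
  \sum_i c i * (i == j)%:R = c j.
Proof.
rewrite (bigD1 j) //= eqxx mulr1 big1 ?addr0 // => i /negbTE ->; by rewrite mulr0.
Qed.

Lemma Qf_schur (R : realType) m (H : 'I_m -> 'I_m -> R) (c : 'I_m -> R) a v :
  Qf (fun i j => H i j - c i * c j / a) v = Qf H v - (\sum_j c j * v j) ^+ 2 / a.
Proof.
rewrite /Qf expr2 mulr_suml mulr_suml -sumrB; apply: eq_bigr => i _.
rewrite mulr_sumr mulr_suml -sumrB; apply: eq_bigr => j _; ring.
Qed.

Lemma chol (R : realType) m (G : 'I_m -> 'I_m -> R) :
  (forall i j, G i j = G j i) -> (forall v, 0 <= Qf G v) ->
  exists x : 'I_m -> 'I_m -> R, forall i j, \sum_k x i k * x j k = G i j.
Proof.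
elim: m G => [|m IH] G sG pG.
  by exists (fun _ _ => 0) => i; case: i.
set a := G ord0 ord0.
set c := fun j => G ord0 (lift ord0 j).
have Qe := fun t v => Q_ext t v sG.
have a0 : 0 <= a.
  have := pG (ext 1 (fun _ => 0)); rewrite Qe Qf0 addr0.
  rewrite big1 ?mulr0 ?addr0 ?expr1n ?mul1r // => j _; by rewrite mulr0.
have ca : a = 0 -> forall j, c j = 0.
  move=> a00 j; apply/eqP; apply/negP => /negP cj0.
  set q := Qf (fun i j => G (lift ord0 i) (lift ord0 j)) (fun i => (i == j)%:R).
  have := pG (ext (- (q + 1) / (2 * c j)) (fun i => (i == j)%:R)).
  rewrite Qe sum_delta_r -/a a00 mulr0 add0r -/q.
  have -> : 2 * (- (q + 1) / (2 * c j)) * c j = - (q + 1) by field.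
  lra.
pose G' := fun i j => G (lift ord0 i) (lift ord0 j) - c i * c j / a.
have [y Hy] : exists y : 'I_m -> 'I_m -> R, forall i j, \sum_k y i k * y j k = G' i j.
  apply: IH.
    by move=> i j; rewrite /G' sG [c i * _]mulrC.
  move=> v; rewrite /G' Qf_schur.
  set s := \sum_j c j * v j.
  have := pG (ext (- (s / a)) v); rewrite Qe -/a.
  have -> : (- (s / a)) ^+ 2 * a + 2 * (- (s / a)) * (\sum_j G ord0 (lift ord0 j) * v j)
           = - (s ^+ 2 / a).
    rewrite -/s; case: (eqVneq a 0) => [->|an0]; first by rewrite invr0; ring.
    by field.
  lra.
exists (ext (ext (Num.sqrt a) (fun _ => 0)) (fun i => ext (c i / Num.sqrt a) (y i))).
have sa2 : Num.sqrt a * Num.sqrt a = a by rewrite -expr2 sqr_sqrtr.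
have key : forall j, Num.sqrt a * (c j / Num.sqrt a) = c j.
  move=> j; case: (eqVneq a 0) => [a00|an0]; first by rewrite (ca a00) mul0r mulr0.
  have sn0 : Num.sqrt a != 0 by rewrite sqrtr_eq0 -ltNge lt_neqAle eq_sym an0 a0.
  by rewrite mulrCA mulfV ?mulr1.
move=> i j.
case: (unliftP ord0 i) => [i' ->|->]; case: (unliftP ord0 j) => [j' ->|->];
  rewrite big_ord_recl ?extl ?ext0 ?extl ?ext0; under eq_bigr do rewrite ?extl.
- rewrite Hy /G' mulf_div sa2 -/c addrC subrK //.
- rewrite big1 ?addr0; last by move=> k _; rewrite ?mulr0 ?mul0r.
  by rewrite mulrC key sG.
- rewrite big1 ?addr0; last by move=> k _; rewrite ?mulr0 ?mul0r.
  by rewrite key.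
- rewrite big1 ?addr0; last by move=> k _; rewrite ?mulr0 ?mul0r.
  by rewrite sa2.
Qed.

Lemma sum_comb (R : realType) m n (a : 'I_m -> R) (y : 'I_m -> 'I_n -> R) (u : 'I_n -> R) :
  \sum_k (\sum_i a i * y i k) * u k = \sum_i a i * \sum_k y i k * u k.
Proof.
under eq_bigr do rewrite mulr_suml.
rewrite exchange_big /=; apply: eq_bigr => i _; rewrite mulr_sumr.
by apply: eq_bigr => k _; rewrite mulrA.
Qed.

Lemma chol_ker0 (R : realType) m (G : 'I_m.+1 -> 'I_m.+1 -> R) (w : 'I_m.+1 -> R) :
  (forall i j, G i j = G j i) -> (forall v, 0 <= Qf G v) ->
  w ord0 != 0 -> (forall i, \sum_j G i j * w j = 0) ->
  exists x : 'I_m.+1 -> 'I_m -> R, forall i j, \sum_k x i k * x j k = G i j.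
Proof.
move=> sG pG w0 kw.
have [y Hy] : exists y : 'I_m -> 'I_m -> R,
    forall i j, \sum_k y i k * y j k = G (lift ord0 i) (lift ord0 j).
  apply: chol; first by move=> i j; rewrite sG.
  move=> v; have := pG (ext 0 v); rewrite Q_ext //.
  by rewrite expr0n /= mul0r mulr0 mul0r !add0r.
pose z k := \sum_i w (lift ord0 i) * y i k.
have zy : forall j, \sum_k z k * y j k = - (G (lift ord0 j) ord0 * w ord0).
  move=> j; rewrite sum_comb.
  have := kw (lift ord0 j); rewrite big_ord_recl => /eqP; rewrite addrC addr_eq0 => /eqP <-.
  by apply: eq_bigr => i _; rewrite Hy sG mulrC.
have zz : \sum_k z k * z k = G ord0 ord0 * w ord0 ^+ 2.
  have zy' : forall j, \sum_k y j k * z k = - (G (lift ord0 j) ord0 * w ord0).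
    by move=> j; rewrite -zy; apply: eq_bigr => k _; rewrite mulrC.
  rewrite (_ : \sum_k z k * z k = \sum_i w (lift ord0 i) * \sum_k y i k * z k); last exact: sum_comb.
  under eq_bigr do rewrite zy'.
  have := kw ord0; rewrite big_ord_recl => /eqP; rewrite addrC addr_eq0 => /eqP E.
  rewrite expr2 mulrA -[G ord0 ord0 * w ord0]opprK -E mulNr mulr_suml -sumrN; apply: eq_bigr => i _.
  rewrite sG; ring.
exists (ext (fun k => - z k / w ord0) y).
have key : forall j, \sum_k (- z k / w ord0) * y j k = G ord0 (lift ord0 j).
  move=> j; rewrite (eq_bigr (fun k => (- (w ord0)^-1) * (z k * y j k))); last first.
    by move=> k _; ring.
  by rewrite -mulr_sumr zy sG; field.
move=> i j.
case: (unliftP ord0 i) => [i' ->|->]; case: (unliftP ord0 j) => [j' ->|->];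
  rewrite ?extl ?ext0.
- exact: Hy.
- by rewrite sG -key; apply: eq_bigr => k _; rewrite mulrC.
- exact: key.
- rewrite (eq_bigr (fun k => w ord0 ^- 2 * (z k * z k))); last first.
    by move=> k _; rewrite expr2 invfM; field.
  by rewrite -mulr_sumr zz; field.
Qed.

Lemma chol_ker (R : realType) m (G : 'I_m.+1 -> 'I_m.+1 -> R) (w : 'I_m.+1 -> R) i0 :
  (forall i j, G i j = G j i) -> (forall v, 0 <= Qf G v) ->
  w i0 != 0 -> (forall i, \sum_j G i j * w j = 0) ->
  exists x : 'I_m.+1 -> 'I_m -> R, forall i j, \sum_k x i k * x j k = G i j.
Proof.
move=> sG pG w0 kw.
pose s := tperm ord0 i0.
have ri : forall F : 'I_m.+1 -> R, \sum_i F i = \sum_i F (s i).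
  by move=> F; apply: reindex_inj; exact: perm_inj.
have h1 : forall i j, G (s i) (s j) = G (s j) (s i) by move=> i j; rewrite sG.
have h2 : forall v, 0 <= Qf (fun i j => G (s i) (s j)) v.
  move=> v; have := pG (fun i => v (s i)); rewrite /Qf ri /=.
  under eq_bigr do rewrite ri /=.
  by under eq_bigr do under eq_bigr do rewrite !tpermK.
have h3 : w (s ord0) != 0 by rewrite tpermL.
have h4 : forall i, \sum_j G (s i) (s j) * w (s j) = 0.
  by move=> i; rewrite -[RHS](kw (s i)) (ri (fun j => G (s i) j * w j)).
have [x Hx] := @chol_ker0 R m (fun i j => G (s i) (s j)) (fun i => w (s i)) h1 h2 h3 h4.
exists (fun i => x (s i)) => i j; by rewrite Hx !tpermK.
Qed.

Lemma quad_mx (R : realType) n (M : 'M[R]_n) (w : 'cV[R]_n) :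
  (w^T *m M *m w) 0 0 = Qf (fun i j => M i j) (fun i => w i 0).
Proof.
rewrite /Qf mxE; under eq_bigr do rewrite mxE mulr_suml.
rewrite exchange_big /=; apply: eq_bigr => i _; apply: eq_bigr => j _.
rewrite !mxE; ring.
Qed.

Lemma perp_sum (R : realType) n (w : 'cV[R]_n) :
  in_ones_perp w <-> \sum_i w i 0 = 0.
Proof.
rewrite /in_ones_perp; split.
  move/matrixP => /(_ 0 0); rewrite !mxE => E; rewrite -[RHS]E; apply: eq_bigr => i _.
  by rewrite !mxE mul1r.
move=> H; apply/matrixP => i j; rewrite !ord1 !mxE -[RHS]H.
by apply: eq_bigr => l _; rewrite !mxE mul1r.
Qed.

Lemma Bw_eq (R : realType) n (M : 'M[R]_n) (w : 'cV[R]_n) g :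
  M *m w = g *: ones R n <-> forall i, \sum_j M i j * w j 0 = g.
Proof.
split.
  by move/matrixP => H i; have := H i 0; rewrite !mxE mulr1.
move=> H; apply/matrixP => i j; rewrite !ord1 !mxE mulr1 -(H i).
by apply: eq_bigr.
Qed.

Lemma L1 (R : realType) n d (w : 'I_n -> R) (X : 'I_n -> 'I_d -> R) :
  \sum_a w a = 0 ->
  \sum_a \sum_b w a * w b * \sum_k (X a k - X b k) ^+ 2
    = - 2 * \sum_k (\sum_a w a * X a k) ^+ 2.
Proof.
move=> sw.
under eq_bigr do under eq_bigr do rewrite mulr_sumr.
under eq_bigr do rewrite exchange_big /=.
rewrite exchange_big /= mulr_sumr; apply: eq_bigr => k _.
have E : forall a b, w a * w b * (X a k - X b k) ^+ 2 =
   (w a * X a k ^+ 2) * w b + w a * (w b * X b k ^+ 2) - 2 * ((w a * X a k) * (w b * X b k)).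
  by move=> a b; ring.
under eq_bigr do under eq_bigr do rewrite E.
under eq_bigr do rewrite sumrB big_split /= -mulr_sumr -mulr_sumr -mulr_sumr sw mulr0 add0r.
rewrite sumrB -mulr_suml sw mul0r add0r -mulr_sumr expr2 mulr_suml mulNr; congr (- (_ * _)).
by apply: eq_bigr => i _; rewrite mulr_sumr.
Qed.

Lemma L2 (R : realType) n d (w : 'I_n -> R) (X : 'I_n -> 'I_d -> R) a :
  \sum_b w b = 0 -> (forall k, \sum_b w b * X b k = 0) ->
  \sum_b w b * \sum_k (X a k - X b k) ^+ 2 = \sum_b w b * \sum_k X b k ^+ 2.
Proof.
move=> sw sx.
under eq_bigr do rewrite mulr_sumr.
rewrite exchange_big /=.
under [RHS]eq_bigr do rewrite mulr_sumr.
rewrite [RHS]exchange_big /=; apply: eq_bigr => k _.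
have E : forall b, w b * (X a k - X b k) ^+ 2 =
   X a k ^+ 2 * w b + w b * X b k ^+ 2 - 2 * X a k * (w b * X b k).
  by move=> b; ring.
under eq_bigr do rewrite E.
by rewrite sumrB big_split /= -!mulr_sumr sx sw !mulr0 add0r subr0.
Qed.

Lemma LG (R : realType) m (H : 'I_m -> 'I_m -> R) (r v : 'I_m -> R) :
  Qf (fun i j => (H i j - r i - r j) / 2) v
    = (Qf H v - 2 * (\sum_i v i) * (\sum_j r j * v j)) / 2.
Proof.
rewrite /Qf.
have E : forall i j, v i * v j * ((H i j - r i - r j) / 2) =
   (v i * v j * H i j - (r i * v i) * v j - v i * (r j * v j)) / 2.
  by move=> i j; ring.
under eq_bigr do under eq_bigr do rewrite E.
under eq_bigr do rewrite -mulr_suml !sumrB -mulr_sumr -mulr_sumr.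
rewrite -mulr_suml !sumrB -mulr_suml -mulr_suml; ring.
Qed.

Lemma forward (R : realType) (d : nat) (e : rel 'I_(d.+2)) (k : R) :
  simple_graph e -> 1 < k -> representable e k ->
   ((forall w : 'cV[R]_(d.+2), in_ones_perp w ->
       0 <= (w^T *m BG e k *m w) 0 0) /\
    (exists (w : 'cV[R]_(d.+2)) (gamma : R),
       w != 0 /\ in_ones_perp w /\ BG e k *m w = gamma *: ones R (d.+2))).
Proof.
move=> [irr sym] k1 [p [a1 [a2 [pinj [a21 [ak [dd [[i1 [j1 [ij1 d1]]] [[i2 [j2 [ij2 d2]]] ee]]]]]]]]].
pose X := fun a l => p a 0 l.
have a2pos : 0 < a2.
  have : 0 <= a2 by rewrite -d2 sqrtr_ge0.
  rewrite le_eqVlt => /orP [/eqP a20|//].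
  by move: ak; rewrite -a20 invr0 mulr0 => k0; move: k1; rewrite -k0 ltr10.
have a2n0 : a2 != 0 by rewrite gt_eqF.
have a1e : a1 = k * a2 by rewrite -ak divfK.
pose S a b := \sum_l (X a l - X b l) ^+ 2.
have dS : forall a b, eucl_dist (p a) (p b) ^+ 2 = S a b.
  move=> a b; rewrite /eucl_dist sqr_sqrtr // sumr_ge0 // => l _; exact: sqr_ge0.
have sqd : forall a b, BG e k a b = - S a b / a2 ^+ 2.
  move=> a b; rewrite mxE; case: (eqVneq a b) => [->|ab].
    by rewrite /S big1 ?oppr0 ?mul0r // => l _; rewrite subrr expr0n.
  rewrite -dS; case eab: (e a b).
    by rewrite ((ee a b ab).1 eab) a1e; field.
  case: (dd a b ab) => [h|->]; last by field.
  by move: eab; rewrite ((ee a b ab).2 h).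
split.
  move=> w /perp_sum sw; rewrite quad_mx /Qf.
  have E : forall a b, w a 0 * w b 0 * (BG e k a b)
      = - (a2 ^+ 2)^-1 * (w a 0 * w b 0 * S a b).
    by move=> a b; rewrite sqd; field.
  under eq_bigr do under eq_bigr do rewrite E.
  under eq_bigr do rewrite -mulr_sumr.
  rewrite -mulr_sumr /S (@L1 _ _ _ (fun a => w a 0) X sw).
  have -> : forall x y : R, - x * (-2 * y) = 2 * x * y by move=> x y; ring.
  apply: mulr_ge0; first by apply: mulr_ge0; [|rewrite invr_ge0 sqr_ge0].
  by apply: sumr_ge0 => l _; exact: sqr_ge0.
pose Pm : 'M[R]_(d.+2, d) := \matrix_(a, l) p a 0 l.
pose A := row_mx (const_mx 1 : 'M[R]_(d.+2, 1)) Pm.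
have rk : \rank (kermx A) != 0%N.
  rewrite mxrank_ker subn_eq0 -ltnNge; apply: leq_ltn_trans (rank_leq_col A) _.
  by rewrite add1n.
have [i0 Hi0] : exists i, row i (kermx A) != 0.
  case: (boolP [exists i, row i (kermx A) != 0]) => [/existsP //|].
  rewrite negb_exists => /forallP H; exfalso; move: rk.
  have -> : kermx A = 0.
    by apply/row_matrixP => i; rewrite row0; apply/eqP; have := H i; rewrite negbK.
  by rewrite mxrank0.
set v := row i0 (kermx A).
have vA : v *m A = 0 by rewrite /v -row_mul mulmx_ker row0.
rewrite mul_mx_row -row_mx0 in vA; have [v1 vP] := eq_row_mx vA.
have sv : \sum_a v 0 a = 0.
  move/matrixP: v1 => /(_ 0 0); rewrite !mxE => E; rewrite -[RHS]E.
  by apply: eq_bigr => a _; rewrite [const_mx _ _ _]mxE mulr1.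
have sx : forall l, \sum_a v 0 a * X a l = 0.
  move=> l; move/matrixP: vP => /(_ 0 l); rewrite !mxE => E; rewrite -[RHS]E.
  by apply: eq_bigr => a _; rewrite [Pm _ _]mxE.
exists v^T, (- (a2 ^+ 2)^-1 * \sum_b v 0 b * \sum_l X b l ^+ 2).
split; first by apply: contra Hi0 => /eqP h; apply/eqP; have := congr1 trmx h; rewrite trmxK trmx0.
split; first by apply/perp_sum; rewrite -[RHS]sv; apply: eq_bigr => a _; rewrite mxE.
apply/Bw_eq => a.
have E : forall b, BG e k a b * v^T b 0 = - (a2 ^+ 2)^-1 * (v 0 b * S a b).
  by move=> b; rewrite sqd mxE; field.
under eq_bigr do rewrite E.
by rewrite -mulr_sumr /S (@L2 _ _ _ (fun b => v 0 b) X a sv sx).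
Qed.

Lemma const_contra (R : realType) n (bb : 'I_n -> 'I_n -> R) (wf : 'I_n -> R) c g :
  c != 0 -> (forall i j, i != j -> bb i j = c) -> (forall i, bb i i = 0) ->
  \sum_i wf i = 0 -> (forall i, \sum_j bb i j * wf j = g) -> forall i, wf i = 0.
Proof.
move=> c0 hc hd sw hg.
have wi : forall i, wf i = - g / c.
  move=> i; have := hg i; rewrite (bigD1 i) //= hd mul0r add0r.
  rewrite (eq_bigr (fun j => c * wf j)); last first.
    by move=> j ji; rewrite hc // eq_sym.
  rewrite -mulr_sumr.
  have := sw; rewrite (bigD1 i) //= => /eqP; rewrite addrC addr_eq0 => /eqP ->.
  by move=> <-; field.
move=> i; rewrite wi.
have : \sum_(j < n) (- g / c) = 0 by rewrite -[RHS]sw; apply: eq_bigr => j _; rewrite wi.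
rewrite sumr_const card_ord => /eqP; rewrite mulrn_eq0 => /orP [/eqP n0|/eqP //].
by have := ltn_ord i; move: (nat_of_ord i) => m; rewrite n0.
Qed.

Lemma cV0 (R : realType) n (w : 'cV[R]_n) : (forall i, w i 0 = 0) -> w = 0.
Proof. by move=> h; apply/matrixP => i j; rewrite ord1 h mxE. Qed.

Lemma sq_exp (R : realType) d (u v : 'I_d -> R) :
  \sum_l (u l - v l) ^+ 2 = \sum_l u l * u l + \sum_l v l * v l - 2 * \sum_l u l * v l.
Proof.
rewrite mulr_sumr -big_split -sumrB; apply: eq_bigr => l _ /=; ring.
Qed.

Lemma sumx0 (R : realType) d (u : 'I_d -> R) : \sum_l u l * 0 = 0.
Proof. by rewrite big1 // => l _; rewrite mulr0. Qed.
Lemma sum0x (R : realType) d (u : 'I_d -> R) : \sum_l 0 * u l = 0.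
Proof. by rewrite big1 // => l _; rewrite mul0r. Qed.
Lemma sum00 (R : realType) d : \sum_(l < d) (0 : R) * 0 = 0.
Proof. by rewrite big1 // => l _; rewrite mul0r. Qed.

Lemma backward (R : realType) (d : nat) (e : rel 'I_(d.+2)) (k : R) :
  simple_graph e -> 1 < k ->
   ((forall w : 'cV[R]_(d.+2), in_ones_perp w ->
       0 <= (w^T *m BG e k *m w) 0 0) /\
    (exists (w : 'cV[R]_(d.+2)) (gamma : R),
       w != 0 /\ in_ones_perp w /\ BG e k *m w = gamma *: ones R (d.+2))) ->
   representable e k.
Proof.
move=> [irr sym] k1 [H1 [w [g [wn0 [/perp_sum sw /Bw_eq bw]]]]].
pose b := fun i j => BG e k i j.
have bE : forall i j, b i j = if i == j then 0 else if e i j then - k ^+ 2 else -1.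
  by move=> i j; rewrite /b mxE.
have bs : forall i j, b i j = b j i by move=> i j; rewrite !bE eq_sym sym.
have b0 : forall i, b i i = 0 by move=> i; rewrite bE eqxx.
have psd : forall v : 'I_d.+2 -> R, \sum_i v i = 0 -> 0 <= Qf b v.
  move=> v sv; have := H1 (\col_i v i).
  rewrite quad_mx; have -> : Qf (fun i j => BG e k i j) (fun i => (\col_i v i) i 0) = Qf b v.
    by rewrite /Qf /b; apply: eq_bigr => i _; apply: eq_bigr => j _; rewrite !mxE.
  apply; apply/perp_sum; rewrite -[RHS]sv; apply: eq_bigr => i _; by rewrite mxE.
pose l : 'I_d.+1 -> 'I_d.+2 := lift ord0.
pose r i := b ord0 (l i).
pose G i j := (b (l i) (l j) - r i - r j) / 2.
have Gs : forall i j, G i j = G j i.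
  by move=> i j; rewrite /G bs; congr (_ / _); ring.
have Gp : forall v, 0 <= Qf G v.
  move=> v; rewrite /G LG; apply: divr_ge0 => //.
  have hs : \sum_i ext (- \sum_i v i) v i = 0.
    rewrite big_ord_recl ext0; apply/eqP; rewrite addrC subr_eq0; apply/eqP; apply: eq_bigr => i _; exact: extl.
  have := psd _ hs; rewrite Q_ext // b0.
  have E : forall S U Q : R, (- S) ^+ 2 * 0 + 2 * - S * U + Q = Q - 2 * S * U.
    by move=> *; ring.
  by rewrite E.
pose w' j := w (l j) 0.
have ker : forall i, \sum_j G i j * w' j = 0.
  move=> i.
  have E : \sum_j G i j * w' j
      = (\sum_j b (l i) (l j) * w' j - r i * \sum_j w' j - \sum_j r j * w' j) / 2.
    rewrite mulr_sumr -!sumrB mulr_suml; apply: eq_bigr => j _; rewrite /G; ring.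
  have f1 : b (l i) ord0 * w ord0 0 + \sum_j b (l i) (l j) * w' j = g.
    by rewrite -(bw (l i)) [RHS]big_ord_recl.
  have f2 : b ord0 ord0 * w ord0 0 + \sum_j r j * w' j = g.
    by rewrite -(bw ord0) [RHS]big_ord_recl.
  rewrite b0 mul0r add0r in f2.
  have f3 : w ord0 0 + \sum_j w' j = 0.
    by rewrite -[RHS]sw [RHS]big_ord_recl.
  have e1 : \sum_j b (l i) (l j) * w' j = g - r i * w ord0 0.
    by rewrite -f1 /r (bs ord0); ring.
  have e2 : \sum_j r j * w' j = g by rewrite -f2.
  have e3 : \sum_j w' j = - w ord0 0.
    by apply/eqP; rewrite -addr_eq0 addrC; apply/eqP.
  by rewrite E e1 e2 e3; ring.
have [j0 Hj0] : exists j, w' j != 0.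
  case: (boolP [exists j, w' j != 0]) => [/existsP //|].
  rewrite negb_exists => /forallP H0; exfalso; move/negP: wn0; apply.
  have a0 : forall j, w' j = 0 by move=> j; apply/eqP; have := H0 j; rewrite negbK.
  have w00 : w ord0 0 = 0.
    by move: sw; rewrite big_ord_recl big1 ?addr0 // => j _; exact: a0.
  apply/eqP; apply: cV0 => i; case: (unliftP ord0 i) => [i' ->|->] //.
  exact: a0.
have [x Hx] := @chol_ker R d G w' j0 Gs Gp Hj0 ker.
pose P := ext (fun _ : 'I_d => 0 : R) x.
pose p a := \row_(q < d) P a q.
have sqd : forall a c, \sum_q (P a q - P c q) ^+ 2 = - b a c.
  move=> a c; rewrite sq_exp.
  case: (unliftP ord0 a) => [a' ->|->]; case: (unliftP ord0 c) => [c' ->|->];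
    rewrite /P ?ext0 ?extl /= ?sumx0 ?sum0x ?sum00 ?mulr0 ?subr0 ?addr0 ?add0r.
  - by rewrite !Hx /G !b0 -/(l a') -/(l c'); field.
  - by rewrite Hx /G b0 -/(l a') -/(r a') /r bs; field.
  - by rewrite Hx /G b0 -/(l c') -/(r c') /r; field.
  - by rewrite b0 oppr0.
have dist : forall a c, eucl_dist (p a) (p c) = Num.sqrt (- b a c).
  by move=> a c; rewrite /eucl_dist -sqd; congr Num.sqrt; apply: eq_bigr => q _; rewrite !mxE.
have k0 : 0 < k by lra.
have dE : forall a c, a != c -> e a c -> eucl_dist (p a) (p c) = k.
  move=> a c ac eac; rewrite dist bE (negbTE ac) eac opprK sqrtr_sqr ger0_norm //; lra.
have dN : forall a c, a != c -> ~~ e a c -> eucl_dist (p a) (p c) = 1.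
  move=> a c ac eac; rewrite dist bE (negbTE ac) (negbTE eac) opprK sqrtr1 //.
have wz : forall c, c != 0 -> (forall i j, i != j -> b i j = c) -> False.
  move=> c c0 hc; move/negP: wn0; apply; apply/eqP; apply: cV0.
  exact: (@const_contra R d.+2 b (fun i => w i 0) c g c0 hc b0 sw bw).
exists p, k, 1.
split.
  move=> a c pac; apply/eqP; apply: contraT => ac.
  have : eucl_dist (p a) (p c) = 0.
    rewrite pac /eucl_dist big1 ?sqrtr0 // => q _; by rewrite subrr expr0n.
  case eac: (e a c); [rewrite dE //|rewrite dN ?eac //]; lra.
split; first lra.
split; first by rewrite divr1.
split.
  by move=> a c ac; case eac: (e a c); [left; rewrite dE | right; rewrite dN ?eac].
split.
  case: (boolP [exists i, exists j, (i != j) && e i j]).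
    by move/existsP => [i /existsP [j /andP [ij eij]]]; exists i, j; split => //; rewrite dE.
  rewrite negb_exists => /forallP H0; exfalso; apply: (wz (-1)); first by rewrite oppr_eq0 oner_eq0.
  move=> i j ij; have := H0 i; rewrite negb_exists => /forallP /(_ j).
  by rewrite ij /= => /negbTE eij; rewrite bE (negbTE ij) eij.
split.
  case: (boolP [exists i, exists j, (i != j) && ~~ e i j]).
    by move/existsP => [i /existsP [j /andP [ij eij]]]; exists i, j; split => //; rewrite dN.
  rewrite negb_exists => /forallP H0; exfalso; apply: (wz (- k ^+ 2)).
    by rewrite oppr_eq0 expf_neq0 // gt_eqF.
  move=> i j ij; have := H0 i; rewrite negb_exists => /forallP /(_ j).
  by rewrite ij /= negbK => eij; rewrite bE (negbTE ij) eij.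
move=> a c ac; split; first by move=> eac; rewrite dE.
case eac: (e a c) => //; rewrite dN ?eac //; lra.
Qed.

Theorem proposition3p2 (R : realType) (d : nat) (e : rel 'I_(d.+2)) (k : R) :
  simple_graph e -> 1 < k ->
  (representable e k <->
   ((forall w : 'cV[R]_(d.+2), in_ones_perp w ->
       0 <= (w^T *m BG e k *m w) 0 0) /\
    (exists (w : 'cV[R]_(d.+2)) (gamma : R),
       w != 0 /\ in_ones_perp w /\ BG e k *m w = gamma *: ones R (d.+2)))).
Proof.
move=> sg k1; split; [exact: forward | exact: backward].
Qed.
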